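(* The vector field $\xi$ is Killing with respect to $g$ (i.e. $\mathcal L_\xi g=0$, so that $(L,\varphi,\xi,\eta,g)$ is a K-contact B-metric manifold) if and only if $(L,\varphi,\xi,\eta,g)\in\mathcal{F}_1\oplus\mathcal{F}_8\oplus\mathcal{F}_{10}$.
   Context: Let $L$ be a 3-dimensional real connected Lie group with Lie algebra $\mathfrak l$, and let $\{E_0,E_1,E_2\}$ be a basis of left-invariant vector fields, with $[E_i,E_j]=C_{ij}^kE_k$. Define the left-invariant almost contact structure $(\varphi,\xi,\eta)$ by $\varphi E_0=0$, $\varphi E_1=E_2$, $\varphi E_2=-E_1$, $\xi=E_0$, $\eta(E_0)=1$, $\eta(E_1)=\eta(E_2)=0$, and the left-invariant pseudo-Riemannian metric $g$ by $g(E_0,E_0)=g(E_1,E_1)=-g(E_2,E_2)=1$, $g(E_i,E_j)=0$ for $i\neq j$. Let $\nabla$ be the Levi-Civita connection of $g$, $F(x,y,z)=g((\nabla_x\varphi)y,z)$, and $F_{ijk}=F(E_i,E_j,E_k)$. The manifold belongs to $\mathcal{F}_1\oplus\mathcal{F}_8\oplus\mathcal{F}_{10}$ iff all $F_{ijk}$ vanish except possibly $F_{111}=F_{122}$, $F_{211}=F_{222}$, $F_{101}=F_{110}=F_{202}=F_{220}$, and $F_{011}=F_{022}$. *)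

(* Defs.v *)
(* real numbers. Everything is left-invariant, so the
   structure is encoded on the Lie algebra in the basis {E0,E1,E2}. *)
From Stdlib Require Import Reals.
Open Scope R_scope.

Inductive I3 : Type := e0 | e1 | e2.

Definition sum3 (f : I3 -> R) : R := f e0 + f e1 + f e2.

(* left-invariant vector fields = components in the basis E0,E1,E2 *)
Definition V : Type := I3 -> R.

Definition E (i : I3) : V := fun k =>
  match i, k with
  | e0, e0 | e1, e1 | e2, e2 => 1
  | _, _ => 0
  end.

Definition vsub (x y : V) : V := fun k => x k - y k.

(* structure constants: C i j k = C_{ij}^k, i.e. [E_i,E_j] = sum_k C_{ij}^k E_k *)
Definition bracket (C : I3 -> I3 -> I3 -> R) (x y : V) : V :=
  fun k => sum3 (fun i => sum3 (fun j => x i * y j * C i j k)).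

Definition is_Lie (C : I3 -> I3 -> I3 -> R) : Prop :=
  (forall i j k, C i j k = - C j i k) /\
  (forall i j l m,
     sum3 (fun k => C i j k * C k l m + C j l k * C k i m + C l i k * C k j m) = 0).

Definition g (x y : V) : R := x e0 * y e0 + x e1 * y e1 - x e2 * y e2.

Definition phi (x : V) : V := fun k =>
  match k with
  | e0 => 0
  | e1 => - x e2
  | e2 => x e1
  end.

Definition xi : V := E e0.
Definition eta (x : V) : R := x e0.

(* A left-invariant connection is given by nab i j = nabla_{E_i} E_j,
   extended bilinearly to left-invariant vector fields. *)
Definition nabla (nab : I3 -> I3 -> V) (x y : V) : V :=
  fun k => sum3 (fun i => sum3 (fun j => x i * y j * nab i j k)).

(* Levi-Civita: torsion-free and metric (g(E_j,E_k) is constant, so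
   E_i g(E_j,E_k) = 0) on the basis of left-invariant fields. *)
Definition is_LeviCivita (C : I3 -> I3 -> I3 -> R) (nab : I3 -> I3 -> V) : Prop :=
  (forall i j k, nab i j k - nab j i k = bracket C (E i) (E j) k) /\
  (forall i j k, g (nab i j) (E k) + g (E j) (nab i k) = 0).

Definition Fijk (nab : I3 -> I3 -> V) (i j k : I3) : R :=
  g (vsub (nabla nab (E i) (phi (E j))) (phi (nabla nab (E i) (E j)))) (E k).

(* (L_xi g)(X,Y) = xi(g(X,Y)) - g([xi,X],Y) - g(X,[xi,Y]); for
   left-invariant X,Y the first term vanishes. *)
Definition Lie_xi_g (C : I3 -> I3 -> I3 -> R) (x y : V) : R :=
  - g (bracket C xi x) y - g x (bracket C xi y).

Definition xi_Killing (C : I3 -> I3 -> I3 -> R) : Prop :=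
  forall i j, Lie_xi_g C (E i) (E j) = 0.

(* the possibly nonzero components in F1 + F8 + F10 *)
Definition allowed (i j k : I3) : bool :=
  match i, j, k with
  | e1, e1, e1 | e1, e2, e2 | e2, e1, e1 | e2, e2, e2
  | e1, e0, e1 | e1, e1, e0 | e2, e0, e2 | e2, e2, e0
  | e0, e1, e1 | e0, e2, e2 => true
  | _, _, _ => false
  end.

Definition in_F1_F8_F10 (F : I3 -> I3 -> I3 -> R) : Prop :=
  (forall i j k, allowed i j k = false -> F i j k = 0) /\
  F e1 e1 e1 = F e1 e2 e2 /\
  F e2 e1 e1 = F e2 e2 e2 /\
  F e1 e0 e1 = F e1 e1 e0 /\ F e1 e1 e0 = F e2 e0 e2 /\ F e2 e0 e2 = F e2 e2 e0 /\
  F e0 e1 e1 = F e0 e2 e2.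

(* Main.v *)
Require Import Defs.
From Stdlib Require Import Reals Lra.
Open Scope R_scope.

Ltac all3 H :=
  let t2 i j := (pose proof (H i j e0); pose proof (H i j e1); pose proof (H i j e2)) in
  let t i := (t2 i e0; t2 i e1; t2 i e2) in
  t e0; t e1; t e2.

Ltac all2 H :=
  let t i := (pose proof (H i e0); pose proof (H i e1); pose proof (H i e2)) in
  t e0; t e1; t e2.

Ltac allF H :=
  let t3 i j k := (try pose proof (H i j k eq_refl)) in
  let t2 i j := (t3 i j e0; t3 i j e1; t3 i j e2) in
  let t i := (t2 i e0; t2 i e1; t2 i e2) in
  t e0; t e1; t e2.

Ltac unf := unfold Fijk, vsub, nabla, phi, Lie_xi_g, xi, bracket, g, E, sum3 in *; simpl in *.

Theorem theorem2p6 (C : I3 -> I3 -> I3 -> R) (nab : I3 -> I3 -> V)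
  (HC : is_Lie C) (HLC : is_LeviCivita C nab) :
  xi_Killing C <-> in_F1_F8_F10 (Fijk nab).
Proof.
  destruct HC as [HA _]. destruct HLC as [HT HM].
  all3 HA. all3 HT. all3 HM. clear HA HT HM.
  split.
  - intro HK. all2 HK. clear HK.
    unf.
    split; [| repeat split; lra].
    intros i j k Hal; destruct i, j, k; simpl in Hal; try discriminate; lra.
  - intros [HF0 HF]. allF HF0. clear HF0.
    intros i j. unf. destruct i, j; simpl; lra.
Qed.
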